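(* Let $K$ be a finite subgroup of $U(\mathbb{H})$, $H$ a normal subgroup of $K$, and $L$ a reflection system for $K$ with $H\subseteq L$ and $LH=L$, and suppose $G=G(K,L,H)$ is in canonical form, i.e. $G=G_K(L,H)$. Let $\alpha$ be the automorphism of $K/H$ determined by $\alpha(xH)=x^{-1}H$ for $x\in L$. Then $$G=\Bigl\{\begin{pmatrix}b&0\\0&b_\alpha h\end{pmatrix}\begin{pmatrix}0&1\\1&0\end{pmatrix}^m : b\in K,\ h\in H,\ m\in\{0,1\}\Bigr\},$$ where $b_\alpha$ denotes any element of the coset $\alpha(bH)$ (e.g. $b_\alpha=b^{-1}$ if $b\in L$). Consequently (i) $|G|=2|H||K|$, and (ii) $G$ contains exactly $2|H|+|L|-2$ reflections.
   Context: $\mathbb{H}$ is the real quaternion algebra with basis $1,i,j,k$, and $U(\mathbb{H})$ the group of unit quaternions. For a group $K$ and $a,b\in K$ put $a\circ b:=ab^{-1}a$. A reflection system for a finite group $K$ is a subset $L\subseteq K$ which generates $K$ as a group, is closed under $\circ$, and contains $1$. For $L$ a reflection system and $H\trianglelefteq K$ with $H\subseteq L$, $LH=L$, the map $xH\mapsto x^{-1}H$ ($x\in L$) is well defined and extends to an automorphism $\alpha$ of $K/H$ of order at most $2$. $G(K,L,H)$ denotes the subgroup of the unitary group $U(\mathbb{H}^2)$ of $2\times 2$ quaternionic matrices generated by $\mathrm{diag}(h,1)$, $\mathrm{diag}(1,h)$ for $h\in H$, and $M_b=\begin{pmatrix}0&b\\ b^{-1}&0\end{pmatrix}$ for $b\in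 L$. It is said to be in canonical form, and is then written $G_K(L,H)$, if $\{b\in K: M_b\in G(K,L,H)\}=L$. A reflection is a non-identity element $g\in U(\mathbb{H}^2)$ with $\operatorname{rank}(g-I)=1$. *)

(* Defs.v *)
From HB Require Import structures.
From mathcomp Require Import all_boot all_order all_algebra.
From mathcomp Require Import finmap.
From mathcomp Require Import ring lra.
Set Implicit Arguments. Unset Strict Implicit. Unset Printing Implicit Defensive.
Import Order.TTheory GRing.Theory Num.Theory.
Local Open Scope ring_scope.

Section Quat.
Variable R : realFieldType.

Record quat := Quat { q0 : R; q1 : R; q2 : R; q3 : R }.

Definition quat_tuple (q : quat) := (q0 q, q1 q, q2 q, q3 q).
Definition tuple_quat (t : R * R * R * R) := let: (a, b, c, d) := t in Quat a b c d.
Lemma quat_tupleK : cancel quat_tuple tuple_quat. Proof. by case. Qed.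
HB.instance Definition _ := Equality.copy quat (can_type quat_tupleK).
HB.instance Definition _ := Choice.copy quat (can_type quat_tupleK).

Definition qzero := Quat 0 0 0 0.
Definition qadd (x y : quat) := Quat (q0 x + q0 y) (q1 x + q1 y) (q2 x + q2 y) (q3 x + q3 y).
Definition qopp (x : quat) := Quat (- q0 x) (- q1 x) (- q2 x) (- q3 x).

Lemma qaddA : associative qadd.
Proof. by move=> [? ? ? ?] [? ? ? ?] [? ? ? ?]; rewrite /qadd /=; congr Quat; ring. Qed.
Lemma qaddC : commutative qadd.
Proof. by move=> [? ? ? ?] [? ? ? ?]; rewrite /qadd /=; congr Quat; ring. Qed.
Lemma qadd0 : left_id qzero qadd.
Proof. by move=> [? ? ? ?]; rewrite /qadd /=; congr Quat; ring. Qed.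
Lemma qaddN : left_inverse qzero qopp qadd.
Proof. by move=> [? ? ? ?]; rewrite /qadd /=; congr Quat; ring. Qed.

HB.instance Definition _ := GRing.isZmodule.Build quat qaddA qaddC qadd0 qaddN.

Definition qone := Quat 1 0 0 0.
Definition qmul (x y : quat) :=
  Quat (q0 x * q0 y - q1 x * q1 y - q2 x * q2 y - q3 x * q3 y)
       (q0 x * q1 y + q1 x * q0 y + q2 x * q3 y - q3 x * q2 y)
       (q0 x * q2 y - q1 x * q3 y + q2 x * q0 y + q3 x * q1 y)
       (q0 x * q3 y + q1 x * q2 y - q2 x * q1 y + q3 x * q0 y).

Lemma qmulA : associative qmul.
Proof. by move=> [? ? ? ?] [? ? ? ?] [? ? ? ?]; rewrite /qmul /=; congr Quat; ring. Qed.
Lemma qmul1 : left_id qone qmul.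
Proof. by move=> [? ? ? ?]; rewrite /qmul /=; congr Quat; ring. Qed.
Lemma qmulr1 : right_id qone qmul.
Proof. by move=> [? ? ? ?]; rewrite /qmul /=; congr Quat; ring. Qed.
Lemma qmulDl : left_distributive qmul qadd.
Proof. by move=> [? ? ? ?] [? ? ? ?] [? ? ? ?]; rewrite /qmul /= /qadd /=; congr Quat; ring. Qed.
Lemma qmulDr : right_distributive qmul qadd.
Proof. by move=> [? ? ? ?] [? ? ? ?] [? ? ? ?]; rewrite /qmul /= /qadd /=; congr Quat; ring. Qed.
Lemma qone_neq0 : qone != 0 :> quat.
Proof. by apply/eqP => -[] /eqP; rewrite oner_eq0. Qed.

HB.instance Definition _ := GRing.Zmodule_isNzRing.Build quat qmulA qmul1 qmulr1 qmulDl qmulDr qone_neq0.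

Lemma qmulE (x y : quat) : x * y = qmul x y. Proof. by []. Qed.

Definition qconj (x : quat) := Quat (q0 x) (- q1 x) (- q2 x) (- q3 x).
Definition qnorm2 (x : quat) := q0 x ^+ 2 + q1 x ^+ 2 + q2 x ^+ 2 + q3 x ^+ 2.

Definition qunit : pred quat := fun x => qnorm2 x != 0.
Definition qinv (x : quat) :=
  if qnorm2 x != 0 then
    Quat (q0 x / qnorm2 x) (- q1 x / qnorm2 x) (- q2 x / qnorm2 x) (- q3 x / qnorm2 x)
  else x.

Lemma qmulVr : {in qunit, left_inverse 1 qinv *%R}.
Proof.
move=> [a b c d] nz0; have nz : qnorm2 (Quat a b c d) != 0 by exact: nz0.
rewrite /qinv nz qmulE /qmul /=; move: nz; rewrite /qnorm2 /= => nz.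
by congr Quat; field.
Qed.
Lemma qmulrV : {in qunit, right_inverse 1 qinv *%R}.
Proof.
move=> [a b c d] nz0; have nz : qnorm2 (Quat a b c d) != 0 by exact: nz0.
rewrite /qinv nz qmulE /qmul /=; move: nz; rewrite /qnorm2 /= => nz.
by congr Quat; field.
Qed.
Lemma qunitP : forall x y : quat, y * x = 1 /\ x * y = 1 -> qunit x.
Proof.
move=> [a b c d] y [yx _]; apply/negP => /eqP; rewrite /qnorm2 /= => n0.
have a0 : a = 0 by apply/eqP; rewrite -sqrf_eq0; apply/eqP; nra.
have b0 : b = 0 by apply/eqP; rewrite -sqrf_eq0; apply/eqP; nra.
have c0 : c = 0 by apply/eqP; rewrite -sqrf_eq0; apply/eqP; nra.
have d0 : d = 0 by apply/eqP; rewrite -sqrf_eq0; apply/eqP; nra.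
move: yx; rewrite a0 b0 c0 d0 qmulE /qmul /= => -[] /eqP.
by rewrite !mulr0 !subr0 eq_sym oner_eq0.
Qed.
Lemma qinv_out : {in [predC qunit], qinv =1 id}.
Proof. by move=> x; rewrite inE unfold_in /qunit /qinv /= => /negbTE ->. Qed.

HB.instance Definition _ := GRing.NzRing_hasMulInverse.Build quat qmulVr qmulrV qunitP qinv_out.
End Quat.


Section Groups.
Variable T : nzRingType.

Definition is_subgroup (P : T -> Prop) : Prop :=
  [/\ P 1, (forall x y, P x -> P y -> P (x * y)) &
      (forall x, P x -> exists y, [/\ P y, x * y = 1 & y * x = 1])].

Definition gen_subgroup (Amb S : T -> Prop) (g : T) : Prop :=
  forall P : T -> Prop, is_subgroup P -> (forall x, P x -> Amb x) ->
    (forall x, S x -> P x) -> P g.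
End Groups.

Definition has_card (T : choiceType) (P : T -> Prop) (n : nat) : Prop :=
  exists S : {fset T}, (forall x, P x <-> x \in S) /\ #|` S| = n.

Section QuatGroups.
Variable R : realFieldType.
Local Notation H := (quat R).

Definition unit_quat (x : H) : Prop := qnorm2 x = 1.

Definition finite_subgroup_UH (K : {fset H}) : Prop :=
  is_subgroup (fun x => x \in K) /\ {in K, forall x, unit_quat x}.

Definition fset_subgroup (S : {fset H}) : Prop := is_subgroup (fun x => x \in S).

Definition normal_sub (N K : {fset H}) : Prop :=
  [/\ fset_subgroup N, (N `<=` K)%fset & {in K & N, forall x h, x * h * x^-1 \in N}].

Definition circ (a b : H) : H := a * b^-1 * a.

Definition reflection_system (K L : {fset H}) : Prop :=
  [/\ (L `<=` K)%fset,
      (forall x, gen_subgroup unit_quat (fun y => y \in L) x <-> x \in K),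
      {in L &, forall a b, circ a b \in L} & 1 \in L].

Definition lcoset (N : {fset H}) (x : H) : {fset H} := [fset x * h | h in N]%fset.

Definition setmul (L N : {fset H}) : {fset H} := [fset x * h | x in L, h in N]%fset.

(* a : K -> K induces (on cosets) the automorphism alpha of K/N with
   alpha(xN) = x^-1 N for x in L *)
Definition induces_alpha (K L N : {fset H}) (a : H -> H) : Prop :=
  [/\ {in K, forall x, a x \in K},
      {in K &, forall x y, lcoset N x = lcoset N y -> lcoset N (a x) = lcoset N (a y)},
      {in K &, forall x y, lcoset N (a (x * y)) = lcoset N (a x * a y)},
      {in K &, forall x y, lcoset N (a x) = lcoset N (a y) -> lcoset N x = lcoset N y} &
      {in K, forall y, exists2 x, x \in K & lcoset N (a x) = lcoset N y}] /\
  {in L, forall x, lcoset N (a x) = lcoset N x^-1}.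

Definition mx2 (a b c d : H) : 'M[H]_2 :=
  \matrix_(i < 2, j < 2)
    if i == 0 :> nat then (if j == 0 :> nat then a else b)
    else (if j == 0 :> nat then c else d).

Definition Mb (b : H) : 'M[H]_2 := mx2 0 b b^-1 0.
Definition Jmx : 'M[H]_2 := mx2 0 1 1 0.

Definition adjmx (g : 'M[H]_2) : 'M[H]_2 := (map_mx (@qconj R) g)^T.
Definition unitary2 (g : 'M[H]_2) : Prop := g *m adjmx g = 1 /\ adjmx g *m g = 1.

Definition G_gens (L N : {fset H}) (x : 'M[H]_2) : Prop :=
  (exists2 h, h \in N & x = mx2 h 0 0 1) \/
  (exists2 h, h \in N & x = mx2 1 0 0 h) \/
  (exists2 b, b \in L & x = Mb b).

Definition GKLH (L N : {fset H}) : 'M[H]_2 -> Prop :=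
  gen_subgroup unitary2 (G_gens L N).

Definition canonical_form (K L N : {fset H}) : Prop :=
  forall b, b \in K -> (GKLH L N (Mb b) <-> b \in L).

Definition rscale (v : 'cV[H]_2) (l : H) : 'cV[H]_2 := map_mx (fun x => x * l) v.

Definition qspan (n : nat) (us : 'I_n -> 'cV[H]_2) (v : 'cV[H]_2) : Prop :=
  exists lam : 'I_n -> H, v = \sum_(i < n) rscale (us i) (lam i).

Definition spans_image (A : 'M[H]_2) (n : nat) : Prop :=
  exists us : 'I_n -> 'cV[H]_2,
    forall v, (exists w, v = A *m w) <-> qspan us v.
Definition qrank (A : 'M[H]_2) (n : nat) : Prop :=
  spans_image A n /\ forall m, (m < n)%N -> ~ spans_image A m.

Definition reflection (g : 'M[H]_2) : Prop := g != 1 /\ qrank (g - 1) 1.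
End QuatGroups.

(* Main.v *)
Require Import Defs.
From HB Require Import structures.
From mathcomp Require Import all_boot all_order all_algebra finmap.
From mathcomp Require Import reals.
Import GRing.Theory.
Local Open Scope ring_scope.
From HB Require Import structures.
From mathcomp Require Import all_boot all_order all_algebra finmap.
From mathcomp Require Import reals ring lra zify.
Import GRing.Theory Num.Theory.
Local Open Scope ring_scope.

Set Implicit Arguments. Unset Strict Implicit.
Lemma card2 (T1 T2 T : choiceType) (f : T1 -> T2 -> T) (A : {fset T1}) (B : {fset T2}) :
  (forall x y x' y', x \in A -> y \in B -> x' \in A -> y' \in B -> f x y = f x' y' -> x = x' /\ y = y') ->
  #|` [fset f x y | x in A, y in B]%fset| = (#|` A| * #|` B|)%N.
Proof.
move=> finj.
rewrite (perm_size (enum_imfset2 _ _)).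
  rewrite size_allpairs; congr (_ * _)%N.
move=> [x y] [x' y']; rewrite !inE /= => /andP[xA yB] /andP[x'A y'B] e.
by have [ex ey] := finj _ _ _ _ xA yB x'A y'B e; subst.
Qed.

Lemma card_disj (T : choiceType) (A B : {fset T}) :
  (forall x, x \in A -> x \notin B) -> #|` (A `|` B)%fset| = (#|` A| + #|` B|)%N.
Proof.
move=> d; rewrite cardfsU disjoint_fsetI0 ?cardfs0 ?subn0 //.
by apply/fdisjointP.
Qed.

Section Basic.
Variable R : realType.
Local Notation Q := (quat R).
Lemma qunitE (x : Q) : (x \is a GRing.unit) = (qnorm2 x != 0).
Proof. by []. Qed.
Lemma qnorm2_eq0 (x : Q) : qnorm2 x = 0 -> x = 0.
Proof.
case: x => a b c d; rewrite /qnorm2 /= => n0.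
have a0 : a = 0 by apply/eqP; rewrite -sqrf_eq0; apply/eqP; nra.
have b0 : b = 0 by apply/eqP; rewrite -sqrf_eq0; apply/eqP; nra.
have c0 : c = 0 by apply/eqP; rewrite -sqrf_eq0; apply/eqP; nra.
have d0 : d = 0 by apply/eqP; rewrite -sqrf_eq0; apply/eqP; nra.
by rewrite a0 b0 c0 d0.
Qed.
Lemma qunit_neq0 (x : Q) : x != 0 -> x \is a GRing.unit.
Proof. by move=> nz; rewrite qunitE; apply: contra nz => /eqP/qnorm2_eq0 ->. Qed.
Lemma qunit_norm1 (x : Q) : qnorm2 x = 1 -> x \is a GRing.unit.
Proof. by move=> n; rewrite qunitE n oner_eq0. Qed.
Lemma qconj_mul1 (x : Q) : qnorm2 x = 1 -> x * qconj x = 1 /\ qconj x * x = 1.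
Proof.
case: x => a b c d; rewrite /qnorm2 /= => n; split; rewrite qmulE /qmul /=;
 congr Quat; rewrite -?n; ring.
Qed.
Lemma qconj0 : qconj (0 : Q) = 0.
Proof. by rewrite /qconj /=; congr Quat; rewrite oppr0. Qed.
Local Notation M := ('M[Q]_2).

Lemma mx2E (p q r s : Q) :
  [/\ mx2 p q r s 0 0 = p, mx2 p q r s 0 1 = q, mx2 p q r s 1 0 = r & mx2 p q r s 1 1 = s].
Proof. by rewrite !mxE. Qed.

Lemma mx2_inj (p q r s p' q' r' s' : Q) : mx2 p q r s = mx2 p' q' r' s' ->
  [/\ p = p', q = q', r = r' & s = s'].
Proof.
move=> e.
have e00 := congr1 (fun g : M => g 0 0) e; have e01 := congr1 (fun g : M => g 0 1) e.
have e10 := congr1 (fun g : M => g 1 0) e; have e11 := congr1 (fun g : M => g 1 1) e.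
by move: e00 e01 e10 e11; rewrite /= !mxE.
Qed.

Lemma mx2_eta (g : M) : g = mx2 (g 0 0) (g 0 1) (g 1 0) (g 1 1).
Proof.
apply/matrixP => i j; rewrite !mxE.
by case: i => [[|[|//]] ?]; case: j => [[|[|//]] ?] /=; congr (g _ _); apply: val_inj.
Qed.

Lemma mx2_mul (p q r s p' q' r' s' : Q) :
  mx2 p q r s * mx2 p' q' r' s' =
  mx2 (p * p' + q * r') (p * q' + q * s') (r * p' + s * r') (r * q' + s * s').
Proof.
rewrite -mulmxE; apply/matrixP => i j; rewrite !mxE big_ord_recl big_ord1 !mxE /=.
by case: i => [[|[|//]] ?]; case: j => [[|[|//]] ?].
Qed.

Lemma mx2_1 : (1 : M) = mx2 1 0 0 1.
Proof.
apply/matrixP => i j; rewrite !mxE.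
by case: i => [[|[|//]] ?]; case: j => [[|[|//]] ?].
Qed.

Lemma mx2_sub (p q r s p' q' r' s' : Q) :
  mx2 p q r s - mx2 p' q' r' s' = mx2 (p - p') (q - q') (r - r') (s - s').
Proof.
apply/matrixP => i j; rewrite !mxE.
by case: i => [[|[|//]] ?]; case: j => [[|[|//]] ?].
Qed.

Lemma adjmx2 (p q r s : Q) : adjmx (mx2 p q r s) = mx2 (qconj p) (qconj r) (qconj q) (qconj s).
Proof.
apply/matrixP => i j; rewrite !mxE.
by case: i => [[|[|//]] ?]; case: j => [[|[|//]] ?].
Qed.

Definition col2 (x y : Q) : 'cV[Q]_2 := \col_(i < 2) (if i == 0 :> nat then x else y).

Lemma col2_eta (v : 'cV[Q]_2) : v = col2 (v 0 0) (v 1 0).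
Proof.
apply/matrixP => i j; rewrite !mxE; rewrite (ord1 j).
by case: i => [[|[|//]] ?] /=; congr (v _ _); apply: val_inj.
Qed.

Lemma col2_inj (x y x' y' : Q) : col2 x y = col2 x' y' -> x = x' /\ y = y'.
Proof.
move=> e; have := congr1 (fun v : 'cV[Q]_2 => v 0 0) e; have := congr1 (fun v : 'cV[Q]_2 => v 1 0) e.
by rewrite !mxE.
Qed.

Lemma mx2_mulcol (p q r s x y : Q) : mx2 p q r s *m col2 x y = col2 (p * x + q * y) (r * x + s * y).
Proof.
apply/matrixP => i j; rewrite !mxE big_ord_recl big_ord1 !mxE /=.
by case: i => [[|[|//]] ?].
Qed.

Lemma rscale2 (x y l : Q) : rscale (col2 x y) l = col2 (x * l) (y * l).
Proof.
apply/matrixP => i j; rewrite !mxE.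
by case: i => [[|[|//]] ?].
Qed.

Lemma qmul_eq0 (x y : Q) : x * y = 0 -> x = 0 \/ y = 0.
Proof.
move=> e; have [->|nz] := eqVneq x 0; [by left|right].
have u : x \is a GRing.unit.
  rewrite unfold_in /=; apply: contra nz => /eqP n.
  case: x n {e} => a b c d; rewrite /qnorm2 /= => n0.
  have a0 : a = 0 by apply/eqP; rewrite -sqrf_eq0; apply/eqP; nra.
  have b0 : b = 0 by apply/eqP; rewrite -sqrf_eq0; apply/eqP; nra.
  have c0 : c = 0 by apply/eqP; rewrite -sqrf_eq0; apply/eqP; nra.
  have d0 : d = 0 by apply/eqP; rewrite -sqrf_eq0; apply/eqP; nra.
  by rewrite a0 b0 c0 d0.
by rewrite -(mulKr u y) e mulr0.
Qed.

Lemma qunit_nz (x : Q) : x != 0 -> x \is a GRing.unit.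
Proof.
move=> nz; rewrite unfold_in /=; apply: contra nz => /eqP n.
case: x n => a b c d; rewrite /qnorm2 /= => n0.
have a0 : a = 0 by apply/eqP; rewrite -sqrf_eq0; apply/eqP; nra.
have b0 : b = 0 by apply/eqP; rewrite -sqrf_eq0; apply/eqP; nra.
have c0 : c = 0 by apply/eqP; rewrite -sqrf_eq0; apply/eqP; nra.
have d0 : d = 0 by apply/eqP; rewrite -sqrf_eq0; apply/eqP; nra.
by rewrite a0 b0 c0 d0.
Qed.

Lemma span1_decomp (p q r s : Q) : spans_image (mx2 p q r s) 1 ->
  exists u1 u2 l1 l2, [/\ p = u1 * l1, q = u1 * l2, r = u2 * l1 & s = u2 * l2].
Proof.
move=> [us Hus].
have [lam1 e1] : qspan us (col2 p r).
  apply/Hus; exists (col2 1 0); rewrite mx2_mulcol; congr col2; rewrite mulr1 mulr0 addr0 //.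
have [lam2 e2] : qspan us (col2 q s).
  apply/Hus; exists (col2 0 1); rewrite mx2_mulcol; congr col2; rewrite mulr1 mulr0 add0r //.
rewrite big_ord1 (col2_eta (us ord0)) rscale2 in e1.
rewrite big_ord1 (col2_eta (us ord0)) rscale2 in e2.
case/col2_inj: e1 => -> ->; case/col2_inj: e2 => -> ->.
by do 4 eexists.
Qed.

Lemma rank1_of (u1 u2 l1 l2 : Q) : (u1 != 0) || (u2 != 0) ->
  l1 \is a GRing.unit \/ l2 \is a GRing.unit ->
  qrank (mx2 (u1 * l1) (u1 * l2) (u2 * l1) (u2 * l2)) 1.
Proof.
move=> unz lu; split.
  exists (fun _ => col2 u1 u2) => v; split.
    move=> [w ->]; rewrite (col2_eta w) mx2_mulcol.
    exists (fun _ => l1 * w 0 0 + l2 * w 1 0).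
    by rewrite big_ord1 rscale2 !mulrDr !mulrA.
  move=> [lam ->]; rewrite big_ord1 rscale2.
  case: lu => u.
    exists (col2 (l1^-1 * lam ord0) 0); rewrite mx2_mulcol !mulr0 !addr0 !mulrA.
    by rewrite !mulrK.
  exists (col2 0 (l2^-1 * lam ord0)); rewrite mx2_mulcol !mulr0 !add0r !mulrA.
  by rewrite !mulrK.
case=> // _ [us Hus].
have key : forall x y : Q, (exists w, col2 x y = mx2 (u1 * l1) (u1 * l2) (u2 * l1) (u2 * l2) *m w) ->
    x = 0 /\ y = 0.
  move=> x y /Hus [lam]; rewrite big_ord0 => e.
  by apply: col2_inj; rewrite e; apply/matrixP => i j; rewrite !mxE; case: ifP.
case: lu => u.
  have [] := key (u1 * l1) (u2 * l1).
    by exists (col2 1 0); rewrite mx2_mulcol !mulr0 !addr0 !mulr1.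
  move=> /(congr1 (fun z => z * l1^-1)); rewrite mulrK // mul0r => a.
  move=> /(congr1 (fun z => z * l1^-1)); rewrite mulrK // mul0r => b.
  by move: unz; rewrite a b eqxx.
have [] := key (u1 * l2) (u2 * l2).
  by exists (col2 0 1); rewrite mx2_mulcol !mulr0 !add0r !mulr1.
move=> /(congr1 (fun z => z * l2^-1)); rewrite mulrK // mul0r => a.
move=> /(congr1 (fun z => z * l2^-1)); rewrite mulrK // mul0r => b.
by move: unz; rewrite a b eqxx.
Qed.
End Basic.

Section Gen.
Variable T : nzRingType.
Variables (Amb S : T -> Prop).
Lemma gen_base x : S x -> gen_subgroup Amb S x.
Proof. by move=> Sx P _ _; apply. Qed.
Lemma gen_1 : gen_subgroup Amb S 1.
Proof. by move=> P [] . Qed.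
Lemma gen_mul x y : gen_subgroup Amb S x -> gen_subgroup Amb S y -> gen_subgroup Amb S (x * y).
Proof. by move=> gx gy P sP PA PS; case: (sP) => _ m _; apply: m; [apply: gx|apply: gy]. Qed.
Lemma gen_inv x y : gen_subgroup Amb S x -> x * y = 1 -> y * x = 1 -> gen_subgroup Amb S y.
Proof.
move=> gx e1 e2 P sP PA PS; have Px := gx P sP PA PS.
case: sP => _ _ /(_ x Px) [z [Pz f1 f2]].
suff -> : y = z by [].
by rewrite -[y]mulr1 -f1 mulrA e2 mul1r.
Qed.
End Gen.

Section G.
Variable R : realType.
Local Notation Q := (quat R).
Local Notation M := ('M[Q]_2).
Variables (K L H : {fset Q}) (a : Q -> Q).
Hypothesis hK : finite_subgroup_UH K.
Hypothesis hH : normal_sub H K.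
Hypothesis ha : induces_alpha K L H a.
Hypothesis hL : reflection_system K L.
Hypothesis hcan : canonical_form K L H.

Lemma Kunit x : x \in K -> x \is a GRing.unit.
Proof.
case: hK => _ /(_ x) n /n e.
have -> : (x \is a GRing.unit) = (qnorm2 x != 0) by [].
by rewrite e oner_eq0.
Qed.

Lemma subV (P : Q -> Prop) : is_subgroup P -> (forall x, P x -> x \is a GRing.unit) ->
  forall x, P x -> P x^-1.
Proof.
move=> [_ _ hV] hu x Px; have [y [Py e1 e2]] := hV x Px.
suff -> : x^-1 = y by [].
by rewrite -[y](mulKr (hu x Px)) e1 mulr1.
Qed.

Lemma K1 : (1 : Q) \in K. Proof. by case: hK => -[]. Qed.
Lemma KM x y : x \in K -> y \in K -> x * y \in K. Proof. by case: hK => -[_ m _] _; apply: m. Qed.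
Lemma KV x : x \in K -> x^-1 \in K.
Proof. by move=> xK; apply: (@subV (fun x => x \in K)) => //; [case: hK|exact: Kunit]. Qed.
Lemma HK x : x \in H -> x \in K. Proof. by case: hH => _ /fsubsetP s _; apply: s. Qed.
Lemma H1 : (1 : Q) \in H. Proof. by case: hH => -[]. Qed.
Lemma HM x y : x \in H -> y \in H -> x * y \in H. Proof. by case: hH => -[_ m _] _ _; apply: m. Qed.
Lemma HV x : x \in H -> x^-1 \in H.
Proof.
move=> xH; apply: (@subV (fun x => x \in H)) => //; first by case: hH.
by move=> y /HK; apply: Kunit.
Qed.
Lemma Hn x h : x \in K -> h \in H -> x * h * x^-1 \in H.
Proof. by case: hH => _ _ n; apply: n. Qed.

Definition cH x y := x^-1 * y \in H.

Lemma cH_refl x : x \in K -> cH x x.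
Proof. by move=> xK; rewrite /cH mulVr ?H1 ?Kunit. Qed.
Lemma cH_sym x y : x \in K -> y \in K -> cH x y -> cH y x.
Proof.
move=> xK yK h; have := HV h; rewrite invrM ?invrK ?unitrV ?Kunit //.
Qed.
Lemma cH_trans x y z : y \in K -> cH x y -> cH y z -> cH x z.
Proof.
move=> yK h1 h2; have := HM h1 h2; rewrite /cH.
by rewrite mulrA -(mulrA _ y) mulrV ?Kunit // mulr1.
Qed.
Lemma cH_K x y : x \in K -> cH x y -> y \in K.
Proof. by move=> xK h; rewrite -(mulVKr (Kunit xK) y); apply: KM => //; apply: HK. Qed.
Lemma cH_mull z x y : z \in K -> x \in K -> cH x y -> cH (z * x) (z * y).
Proof.
move=> zK xK; rewrite /cH invrM ?Kunit // -mulrA (mulrA _ z) mulVr ?Kunit // mul1r; exact.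
Qed.
Lemma cH_mulr z x y : z \in K -> x \in K -> cH x y -> cH (x * z) (y * z).
Proof.
move=> zK xK h; rewrite /cH invrM ?Kunit // -mulrA mulrA.
have := Hn (KV zK) h; rewrite invrK; congr (_ \in H).
by rewrite !mulrA.
Qed.
Lemma cH_inv x y : x \in K -> y \in K -> cH x y -> cH x^-1 y^-1.
Proof.
move=> xK yK h; have h' := cH_sym xK yK h.
have := Hn xK h'; rewrite /cH invrK -!mulrA mulrV ?Kunit // mulr1; exact.
Qed.
Lemma cH1 h : cH 1 h = (h \in H).
Proof. by rewrite /cH invr1 mul1r. Qed.

Lemma lcoset_mem x y : (y \in lcoset H x) = [exists h : H, y == x * val h].
Proof.
apply/imfsetP/existsP => [[h hin ->]|[h /eqP ->]]; last by exists (val h) => //; apply: valP.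
by exists [` hin]%fset.
Qed.

Lemma lcoset_eq x y : x \in K -> y \in K -> (lcoset H x = lcoset H y <-> cH x y).
Proof.
move=> xK yK; split => [e|h].
  have : y \in lcoset H y by rewrite lcoset_mem; apply/existsP; exists [` H1]%fset; rewrite /= mulr1.
  rewrite -e lcoset_mem => /existsP [[h hin] /eqP ->] /=.
  by rewrite /cH mulKr ?Kunit.
apply/fsetP => z; rewrite !lcoset_mem; apply/existsP/existsP => -[[k kH] /eqP ->] /=.
  exists [` HM (cH_sym xK yK h) kH]%fset; apply/eqP => /=.
  by rewrite mulrA mulrA mulrV ?Kunit // mul1r.
exists [` HM h kH]%fset; apply/eqP => /=.
by rewrite mulrA mulrA mulrV ?Kunit // mul1r.
Qed.

Lemma LK x : x \in L -> x \in K.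
Proof. by case: hL => /fsubsetP s _ _ _; apply: s. Qed.

Lemma aK x : x \in K -> a x \in K. Proof. by case: ha => -[h _ _ _ _] _; apply: h. Qed.
Lemma a_cong x y : x \in K -> y \in K -> cH x y -> cH (a x) (a y).
Proof.
move=> xK yK h; case: ha => -[_ h2 _ _ _] _.
by apply/lcoset_eq; rewrite ?aK //; apply: h2 => //; apply/lcoset_eq.
Qed.
Lemma a_mul x y : x \in K -> y \in K -> cH (a (x * y)) (a x * a y).
Proof.
move=> xK yK; case: ha => -[_ _ h3 _ _] _.
by apply/lcoset_eq; rewrite ?aK ?KM ?aK //; apply: h3.
Qed.
Lemma a_inj x y : x \in K -> y \in K -> cH (a x) (a y) -> cH x y.
Proof.
move=> xK yK h; case: ha => -[_ _ _ h4 _] _.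
by apply/lcoset_eq => //; apply: h4 => //; apply/lcoset_eq; rewrite ?aK.
Qed.
Lemma aL x : x \in L -> cH (a x) x^-1.
Proof.
move=> xL; have xK := LK xL; case: ha => _ h6.
by apply/lcoset_eq; rewrite ?aK ?KV //; apply: h6.
Qed.

Lemma a1H : a 1 \in H.
Proof. by have := a_mul K1 K1; rewrite /cH mul1r mulKr ?Kunit ?aK ?K1. Qed.

Lemma aV x : x \in K -> cH (a x^-1) (a x)^-1.
Proof.
move=> xK; have h := a_mul xK (KV xK); rewrite mulrV ?Kunit // in h.
have h' : cH 1 (a x * a x^-1) by apply: cH_trans h; rewrite ?aK ?K1 // cH1 a1H.
rewrite cH1 in h'; have := HV h'; rewrite invrM ?Kunit ?aK ?KV //.
Qed.

Lemma gen_K (P : Q -> Prop) : is_subgroup P -> (forall x, P x -> x \in K) ->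
  (forall x, x \in L -> P x) -> forall x, x \in K -> P x.
Proof.
move=> sP PK LP x xK; case: hL => _ hg _ _; have := (hg x).2 xK; apply => //.
by move=> y /PK yK; case: hK => _; apply.
Qed.

Lemma aa : forall x, x \in K -> cH (a (a x)) x.
Proof.
pose P x := x \in K /\ cH (a (a x)) x.
have aaK y : y \in K -> a (a y) \in K by move=> ?; rewrite !aK.
suff hP : forall x, x \in K -> P x by move=> x xK; case: (hP x xK).
apply: (@gen_K P); [|by move=> x []|].
- split.
  + split; first exact: K1.
    have h1 : cH (a 1) 1 by apply: cH_sym; rewrite ?aK ?K1 // cH1 a1H.
    have h2 : cH (a (a 1)) (a 1) by apply: a_cong; rewrite ?aK ?K1.
    by apply: (@cH_trans _ (a 1)); rewrite ?aK ?K1.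
  + move=> x y [xK hx] [yK hy]; split; first exact: KM.
    have xyK := KM xK yK.
    apply: (@cH_trans _ (a (a x * a y))); first by rewrite aK ?KM ?aK.
      by apply: a_cong (a_mul xK yK); rewrite ?aK ?KM ?aK.
    apply: (@cH_trans _ (a (a x) * a (a y))); first by rewrite KM ?aaK.
      by apply: a_mul; rewrite aK.
    apply: (@cH_trans _ (x * a (a y))); first by rewrite KM ?aaK.
      by apply: cH_mulr; rewrite ?aaK.
    by apply: cH_mull => //; exact: aaK.
  + move=> x [xK hx]; exists x^-1; split; last by rewrite mulVr ?Kunit.
      split; first exact: KV.
      apply: (@cH_trans _ (a (a x)^-1)); first by rewrite aK ?KV ?aK.
        by apply: a_cong (aV xK); rewrite ?aK ?KV ?aK.
      apply: (@cH_trans _ (a (a x))^-1); first by rewrite KV ?aaK.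
        by apply: aV; rewrite aK.
      by apply: cH_inv; rewrite ?aaK.
    by rewrite mulrV ?Kunit.
- move=> x xL; have xK := LK xL; split => //.
  apply: (@cH_trans _ (a x^-1)); first by rewrite aK ?KV.
    by apply: a_cong (aL xL); rewrite ?aK ?KV.
  apply: (@cH_trans _ (a x)^-1); first by rewrite KV ?aK.
    exact: aV.
  by have := cH_inv (aK xK) (KV xK) (aL xL); rewrite invrK.
Qed.

Lemma cross_straight b b' c c' : b \in K -> b' \in K -> cH (a b) c -> cH (a b') c' ->
  cH (a (b * b')) (c * c').
Proof.
move=> bK b'K hc hc'; have c'K := cH_K (aK b'K) hc'.
apply: (@cH_trans _ (a b * a b')); first by rewrite KM ?aK.
  exact: a_mul.
apply: (@cH_trans _ (a b * c')); first by rewrite KM ?aK.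
  by apply: cH_mull; rewrite ?aK.
by apply: cH_mulr; rewrite ?aK.
Qed.

Lemma cross_twist b b' c c' : b \in K -> b' \in K -> cH (a b) c -> cH (a b') c' ->
  cH (a (b * c')) (c * b').
Proof.
move=> bK b'K hc hc'; have c'K := cH_K (aK b'K) hc'.
apply: (@cH_trans _ (a b * a c')); first by rewrite KM ?aK.
  exact: a_mul.
apply: (@cH_trans _ (a b * b')); first by rewrite KM ?aK.
  apply: cH_mull; rewrite ?aK //.
  apply: (@cH_trans _ (a (a b'))); first by rewrite !aK.
    by apply: a_cong; rewrite ?aK //; apply: cH_sym; rewrite ?aK.
  exact: aa.
by apply: cH_mulr; rewrite ?aK.
Qed.

Lemma Knorm x : x \in K -> qnorm2 x = 1.
Proof. by case: hK => _ h; apply: h. Qed.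

Definition Sg (g : M) := exists b c, [/\ b \in K, cH (a b) c & (g = mx2 b 0 0 c \/ g = mx2 0 b c 0)].

Ltac simp := rewrite ?(mul0r, mulr0, addr0, add0r).

Lemma S_sub : is_subgroup Sg.
Proof.
split.
- exists 1, 1; split; first exact: K1.
    by apply: cH_sym; rewrite ?aK ?K1 // cH1 a1H.
  by left; rewrite mx2_1.
- move=> g g' [b [c [bK hc eg]]] [b' [c' [b'K hc' eg']]].
  have cK := cH_K (aK bK) hc; have c'K := cH_K (aK b'K) hc'.
  case: eg => ->; case: eg' => ->; rewrite mx2_mul; simp.
  + exists (b * b'), (c * c'); split; [exact: KM|exact: cross_straight|by left].
  + exists (b * b'), (c * c'); split; [exact: KM|exact: cross_straight|by right].
  + exists (b * c'), (c * b'); split; [exact: KM|exact: cross_twist|by right].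
  + exists (b * c'), (c * b'); split; [exact: KM|exact: cross_twist|by left].
- move=> g [b [c [bK hc eg]]].
  have cK := cH_K (aK bK) hc; have bu := Kunit bK; have cu := Kunit cK.
  case: eg => ->.
    exists (mx2 b^-1 0 0 c^-1); split; rewrite ?mx2_mul; simp; rewrite ?mulrV ?mulVr ?mx2_1 //.
    exists b^-1, c^-1; split; [exact: KV| |by left].
    apply: (@cH_trans _ (a b)^-1); first by rewrite KV ?aK.
      exact: aV.
    by apply: cH_inv; rewrite ?aK.
  exists (mx2 0 c^-1 b^-1 0); split; rewrite ?mx2_mul; simp; rewrite ?mulrV ?mulVr ?mx2_1 //.
  exists c^-1, b^-1; split; [exact: KV| |by right].
  apply: (@cH_trans _ (a c)^-1); first by rewrite KV ?aK.
    exact: aV.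
  apply: cH_inv; rewrite ?aK //.
  apply: (@cH_trans _ (a (a b))); first by rewrite !aK.
    by apply: a_cong; rewrite ?aK //; apply: cH_sym; rewrite ?aK.
  exact: aa.
Qed.

Lemma S_unitary g : Sg g -> unitary2 g.
Proof.
move=> [b [c [bK hc eg]]]; have cK := cH_K (aK bK) hc.
have [b1 b2] := qconj_mul1 (Knorm bK); have [c1 c2] := qconj_mul1 (Knorm cK).
rewrite /unitary2.
case: eg => ->; rewrite adjmx2 !qconj0 !mulmxE !mx2_mul; simp.
  by rewrite b1 b2 c1 c2 -mx2_1.
by rewrite b1 b2 c1 c2 -mx2_1.
Qed.

Lemma S_gens g : G_gens L H g -> Sg g.
Proof.
case=> [[h hin ->]|[[h hin ->]|[b bL ->]]].
- exists h, 1; split; [exact: HK| |by left].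
  apply: (@cH_trans _ (a 1)); first by rewrite aK ?K1.
    by apply: a_cong; rewrite ?K1 ?HK //; apply: cH_sym; rewrite ?K1 ?HK // cH1.
  by apply: cH_sym; rewrite ?aK ?K1 // cH1 a1H.
- exists 1, h; split; first exact: K1.
    apply: (@cH_trans _ 1); first exact: K1.
      by apply: cH_sym; rewrite ?aK ?K1 // cH1 a1H.
    by rewrite cH1.
  by left.
- exists b, b^-1; split; [exact: LK|exact: aL|by right].
Qed.

Lemma G_S g : GKLH L H g -> Sg g.
Proof. by move=> gG; apply: gG; [exact: S_sub|exact: S_unitary|exact: S_gens]. Qed.

Lemma S_diag x c : Sg (mx2 x 0 0 c) -> x != 0 -> x \in K /\ cH (a x) c.
Proof.
move=> [b [c0 [bK hc [/mx2_inj [-> _ _ ->] //|/mx2_inj [-> _ _ _]]]]].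
by rewrite eqxx.
Qed.

Lemma Kneq0 x : x \in K -> x != 0.
Proof. by move=> /Kunit; apply: contraTneq => ->; rewrite unitr0. Qed.

Lemma GMb b : b \in L -> GKLH L H (Mb b).
Proof. by move=> bL; apply: gen_base; right; right; exists b. Qed.
Lemma Gh1 h : h \in H -> GKLH L H (mx2 h 0 0 1).
Proof. by move=> hin; apply: gen_base; left; exists h. Qed.
Lemma Gh2 h : h \in H -> GKLH L H (mx2 1 0 0 h).
Proof. by move=> hin; apply: gen_base; right; left; exists h. Qed.
Lemma L1 : (1 : Q) \in L. Proof. by case: hL. Qed.

Lemma diag_G : forall x, x \in K -> exists c, GKLH L H (mx2 x 0 0 c).
Proof.
pose P x := x \in K /\ exists c, GKLH L H (mx2 x 0 0 c).
suff hP : forall x, x \in K -> P x by move=> x xK; case: (hP x xK).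
apply: (@gen_K P); [|by move=> x []|].
- split.
  + by split; [exact: K1|exists 1; rewrite -mx2_1; exact: gen_1].
  + move=> x y [xK [c gc]] [yK [d gd]]; split; first exact: KM.
    by exists (c * d); have := gen_mul gc gd; rewrite mx2_mul; simp.
  + move=> x [xK [c gc]]; exists x^-1; split; last by rewrite mulVr ?Kunit.
      split; first exact: KV.
      have [_ hc] := S_diag (G_S gc) (Kneq0 xK).
      have cK := cH_K (aK xK) hc.
      exists c^-1; apply: (gen_inv gc); rewrite mx2_mul; simp;
        by rewrite ?mulrV ?mulVr ?Kunit // mx2_1.
    by rewrite mulrV ?Kunit.
- move=> x xL; split; first exact: LK.
  exists x^-1; have := gen_mul (GMb xL) (GMb L1).
  by rewrite /Mb mx2_mul invr1; simp; rewrite ?mulr1 ?mul1r.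
Qed.

Lemma S_G g : Sg g -> GKLH L H g.
Proof.
move=> [b [c [bK hc eg]]].
have [c0 gc0] := diag_G bK.
have [_ hc0] := S_diag (G_S gc0) (Kneq0 bK).
have c0K := cH_K (aK bK) hc0.
have hh : c0^-1 * c \in H.
  by apply: (@cH_trans _ (a b)); rewrite ?aK //; apply: cH_sym; rewrite ?aK.
have gD : GKLH L H (mx2 b 0 0 c).
  have := gen_mul gc0 (Gh2 hh).
  by rewrite mx2_mul; simp; rewrite mulr1 mulVKr ?Kunit.
case: eg => -> //.
have := gen_mul gD (GMb L1).
by rewrite /Mb mx2_mul invr1; simp; rewrite !mulr1.
Qed.
Lemma part1 g : GKLH L H g <->
  exists b h (m : nat), [/\ b \in K, h \in H, (m <= 1)%N &
           g = mx2 b 0 0 (a b * h) *m Jmx R ^+ m].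
Proof.
split.
  move=> /G_S [b [c [bK hc eg]]]; have abu := Kunit (aK bK).
  exists b, ((a b)^-1 * c); case: eg => ->.
    by exists 0%N; split => //; rewrite mulVKr // expr0 mulmx1.
  exists 1%N; split => //; rewrite mulVKr // expr1 mulmxE /Jmx mx2_mul; simp; rewrite !mulr1 //.
move=> [b [h [m [bK hin hm ->]]]]; apply: S_G.
have abu := Kunit (aK bK).
exists b, (a b * h); split => //; first by rewrite /cH mulKr.
case: m hm => [|[|//]] _; first by rewrite expr0 mulmx1; left.
by rewrite expr1 mulmxE /Jmx mx2_mul; simp; rewrite !mulr1; right.
Qed.

Lemma part2 : has_card (GKLH L H) (2 * #|` H| * #|` K|).
Proof.
pose A := [fset mx2 b 0 0 (a b * h) | b in K, h in H]%fset.
pose B := [fset mx2 0 b (a b * h) 0 | b in K, h in H]%fset.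
exists (A `|` B)%fset; split.
  move=> g; rewrite in_fsetU; split.
    move=> /G_S [b [c [bK hc eg]]]; have abu := Kunit (aK bK).
    apply/orP; case: eg => ->; [left|right]; apply/imfset2P; exists b => //;
      exists ((a b)^-1 * c); by rewrite ?mulVKr.
  move=> /orP [] /imfset2P [b bK [h hin ->]]; apply: S_G; exists b, (a b * h);
    (split => //; first by rewrite /cH mulKr ?Kunit ?aK); [left|right] => //.
rewrite card_disj.
  rewrite !card2; first by rewrite addnn -mul2n mulnA mulnAC.
    move=> b h b' h' bK hin b'K h'H /= e; have [_ eb ec _] := mx2_inj e; subst b'; split => //.
    by rewrite -[h](mulKr (Kunit (aK bK))) ec mulKr ?Kunit ?aK.
  move=> b h b' h' bK hin b'K h'H /= e; have [eb _ _ ec] := mx2_inj e; subst b'; split => //.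
  by rewrite -[h](mulKr (Kunit (aK bK))) ec mulKr ?Kunit ?aK.
move=> g /imfset2P [b bK [h hin ->]]; apply/negP => /imfset2P [b' b'K [h' h'H /mx2_inj [eb _ _ _]]].
by move: (Kneq0 bK); rewrite eb eqxx.
Qed.
Lemma Mb_eq b : Mb b = mx2 0 b b^-1 0 :> M. Proof. by []. Qed.

Lemma refl_diag1 c : c != 1 -> @reflection R (mx2 1 0 0 c).
Proof.
move=> c1; split.
  by rewrite mx2_1; apply/eqP => /mx2_inj [_ _ _ e]; move: c1; rewrite e eqxx.
have -> : mx2 1 0 0 c - 1 = mx2 (0 * 0) (0 * (c - 1)) (1 * 0) (1 * (c - 1)) :> M.
  rewrite mx2_1 mx2_sub.
  by rewrite !subrr !(mul0r, mulr0, mul1r).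
apply: rank1_of; first by rewrite oner_eq0 orbT.
by right; apply: qunit_nz; rewrite subr_eq0.
Qed.

Lemma refl_diag2 b : b != 1 -> @reflection R (mx2 b 0 0 1).
Proof.
move=> b1; split.
  by rewrite mx2_1; apply/eqP => /mx2_inj [e _ _ _]; move: b1; rewrite e eqxx.
have -> : mx2 b 0 0 1 - 1 = mx2 (1 * (b - 1)) (1 * 0) (0 * (b - 1)) (0 * 0) :> M.
  by rewrite mx2_1 mx2_sub !subrr !(mul0r, mulr0, mul1r).
apply: rank1_of; first by rewrite oner_eq0.
by left; apply: qunit_nz; rewrite subr_eq0.
Qed.

Lemma refl_Mb b : b \is a GRing.unit -> @reflection R (Mb b).
Proof.
move=> bu; split.
  by rewrite Mb_eq mx2_1; apply/eqP => /mx2_inj [e _ _ _]; move: (@oner_neq0 Q); rewrite -e eqxx.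
have -> : Mb b - 1 = mx2 (1 * -1) (1 * b) (- b^-1 * -1) (- b^-1 * b) :> M.
  by rewrite Mb_eq mx2_1 mx2_sub !subr0 sub0r mulrNN mulNr mulVr // !mulr1 !mul1r.
apply: rank1_of; first by rewrite oner_eq0.
by left; rewrite unitrN unitr1.
Qed.

Lemma nrefl_diag b c : b != 1 -> c != 1 -> ~ @reflection R (mx2 b 0 0 c).
Proof.
move=> b1 c1 [_ [hs _]]; move: hs; rewrite mx2_1 mx2_sub !subrr.
move=> /span1_decomp [u1 [u2 [l1 [l2 [e1 e2 e3 e4]]]]].
have nb : b - 1 != 0 by rewrite subr_eq0.
have nc : c - 1 != 0 by rewrite subr_eq0.
have u1n : u1 != 0 by apply: contraNneq nb => z; rewrite e1 z mul0r.
have l2z : l2 = 0 by case: (qmul_eq0 (esym e2)) => // z; move: u1n; rewrite z eqxx.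
by move: nc; rewrite e4 l2z mulr0 eqxx.
Qed.

Lemma nrefl_anti b c : b \is a GRing.unit -> c * b != 1 -> ~ @reflection R (mx2 0 b c 0).
Proof.
move=> bu cb [_ [hs _]]; move: hs; rewrite mx2_1 mx2_sub !subr0 sub0r.
move=> /span1_decomp [u1 [u2 [l1 [l2 [e1 e2 e3 e4]]]]].
have u1n : u1 != 0.
  apply/eqP => z; move: e1; rewrite z mul0r => /eqP; rewrite oppr_eq0 oner_eq0.
  by [].
have u1u := qunit_nz u1n.
have l1e : l1 = - u1^-1.
  by rewrite -[l1](mulKr u1u) -e1 mulrN1.
have : c * b = 1.
  by rewrite e3 e2 l1e -mulrA (mulrA _ u1) mulNr mulVr // mulN1r mulrN -e4 opprK.
by move/eqP; rewrite (negbTE cb).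
Qed.

Lemma part3 : has_card (fun g => GKLH L H g /\ reflection g) (2 * #|` H| + #|` L| - 2).
Proof.
pose A := [fset mx2 1 0 0 c | c in (H `\ 1)%fset]%fset.
pose B := [fset mx2 b 0 0 1 | b in (H `\ 1)%fset]%fset.
pose C := [fset Mb b | b in L]%fset.
exists ((A `|` B) `|` C)%fset; split.
  move=> g; rewrite !in_fsetU; split.
    move=> [gG gr]; have [b [c [bK hc eg]]] := G_S gG.
    case: eg => eg.
      have [b1|b1] := eqVneq b 1.
        apply/orP; left; apply/orP; left; apply/imfsetP; exists c; last by rewrite eg b1.
        rewrite in_fsetD1; apply/andP; split.
          by apply/eqP => c1; move: gr => [/eqP gn _]; apply: gn; rewrite eg b1 c1 -mx2_1.
        by rewrite -(mulVKr (Kunit (aK K1)) c); apply: HM; rewrite ?HV ?a1H //; rewrite b1 in hc.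
      have [c1|c1] := eqVneq c 1.
        apply/orP; left; apply/orP; right; apply/imfsetP; exists b; last by rewrite eg c1.
        rewrite in_fsetD1 b1 /=.
        have : cH b 1.
          apply: a_inj; rewrite ?K1 //.
          apply: (@cH_trans _ 1); first exact: K1.
            by rewrite -c1.
          by rewrite cH1 a1H.
        by rewrite /cH mulr1 => /HV; rewrite invrK.
      by case: (nrefl_diag b1 c1); rewrite -eg.
    have cK := cH_K (aK bK) hc.
    have [cb|cb] := eqVneq (c * b) 1; last first.
      by case: (nrefl_anti (Kunit bK) cb); rewrite -eg.
    have ec : c = b^-1 by rewrite -[c](mulrK (Kunit bK)) cb mul1r.
    apply/orP; right; apply/imfsetP; exists b; last by rewrite eg ec.
    by apply/(hcan bK); rewrite Mb_eq -ec -eg.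
  move=> /orP [/orP [] | ] /imfsetP [x xin ->]; split.
  - by apply: Gh2; move: xin; rewrite in_fsetD1 => /andP [].
  - by apply: refl_diag1; move: xin; rewrite in_fsetD1 => /andP [].
  - by apply: Gh1; move: xin; rewrite in_fsetD1 => /andP [].
  - by apply: refl_diag2; move: xin; rewrite in_fsetD1 => /andP [].
  - exact: GMb.
  - by apply: refl_Mb; apply: Kunit; apply: LK.
have cA : #|` A| = #|` (H `\ 1)%fset|.
  by rewrite card_in_imfset // => x y _ _ /mx2_inj [].
have cB : #|` B| = #|` (H `\ 1)%fset|.
  by rewrite card_in_imfset // => x y _ _ /mx2_inj [].
have cC : #|` C| = #|` L|.
  by rewrite card_in_imfset // => x y _ _; rewrite !Mb_eq => /mx2_inj [].
have cH1 : #|` H| = (#|` (H `\ 1)%fset|).+1 by rewrite (cardfsD1 1 H) H1.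
rewrite card_disj.
  rewrite card_disj.
    rewrite cA cB cC cH1; lia.
  move=> g /imfsetP [x xin ->]; apply/negP => /imfsetP [y yin /mx2_inj [e _ _ _]].
  by move: yin; rewrite -e in_fsetD1 eqxx.
move=> g; rewrite in_fsetU => /orP [] /imfsetP [x xin ->]; apply/negP => /imfsetP [y yin];
  rewrite Mb_eq => /mx2_inj [e _ _ _].
  by move: (@oner_neq0 Q); rewrite e eqxx.
by move: xin; rewrite e in_fsetD1 => /andP [_ /HK /Kneq0]; rewrite eqxx.
Qed.
End G.

Theorem lemma2p5 (R : realType) (K L H : {fset quat R}) (a : quat R -> quat R) :
  finite_subgroup_UH K ->
  normal_sub H K ->
  reflection_system K L ->
  (H `<=` L)%fset ->
  setmul L H = L ->
  canonical_form K L H ->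
  induces_alpha K L H a ->
  [/\ (forall g : 'M[quat R]_2, GKLH L H g <->
         exists b h (m : nat), [/\ b \in K, h \in H, (m <= 1)%N &
           g = mx2 b 0 0 (a b * h) *m Jmx R ^+ m]),
      has_card (GKLH L H) (2 * #|` H| * #|` K|) &
      has_card (fun g => GKLH L H g /\ reflection g) (2 * #|` H| + #|` L| - 2)].
Proof.
move=> hK hH hL _ _ hcan ha; split.
- by move=> g; apply: (part1 hK hH ha hL).
- exact: (part2 hK hH ha hL).
- exact: (part3 hK hH ha hL hcan).
Qed.
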